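(* Let $(v,\rho)\in\mathbb V^N\times\mathbb P^N$ be a variable network game such that $v$ is component additive. (a) For every link $ij\in g_N$: $\mathbb E(v,\rho^{-ij})=\mathbb E(v,\rho)-\sum_{g\colon ij\notin g}\rho(g+ij)\cdot\Delta_{ij}(v,g)$. (b) For every player $i\in N$: $\mathbb E(v,\rho^{-i})=\mathbb E(v,\rho)-\sum_{g\colon i\in N(g)}\rho(g)\cdot\Delta_i(v,g)$.
   Context: $N=\{1,\dots,n\}$ is a finite player set. A link is an unordered pair $ij=\{i,j\}$ of distinct players; $g_N$ is the set of all links; a network is any $g\subseteq g_N$; $\mathbb G^N$ is the set of all networks. For a network $g$: $N(g)$ is the set of players with at least one link in $g$; $L_i(g)=\{ij\in g\}$; $L_i=L_i(g_N)$; $g+ij=g\cup\{ij\}$. A component of $g$ is a nonempty maximal connected subnetwork of $g$; $C(g)$ is the set of components. A network formation probability distribution is $\rho\colon\mathbb G^N\to[0,1]$ with $\sum_g\rho(g)=1$; $\mathbb P^N$ is the set of these. For a network $g$, the restriction $\rho_g$ is $\rho_g(h)=\sum_{h'\subseteq g_N\setminus g}\rho(h\cup h')$ if $h\subseteq g$ and $0$ otherwise. $\rho^{-ij}=\rho_{g_N\setminus\{ij\}}$ and $\rho^{-i}=\rho_{g_N\setminus L_i}$. A network game is $v\colon\mathbb G^N\to\mathbb R$ with $v(\varnothing)=0$; $\mathbb V^N$ is the set of these; $v$ is component additive if $v(g)=\sum_{h\in C(g)}v(h)$ for all $g$. The expected wealth is $\mathbb E(v,\rho)=\sum_{g\in\mathbb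 G^N}\rho(g)v(g)$. Marginal contributions: for $ij\notin g$, $\Delta_{ij}(v,g)=v(g+ij)-v(g)$; for $i\in N(g)$, $\Delta_i(v,g)=v(g)-v(g\setminus L_i)$. *)

(* Defs.v *)
From HB Require Import structures.
From mathcomp Require Import all_boot all_order all_algebra.
Set Implicit Arguments. Unset Strict Implicit. Unset Printing Implicit Defensive.
Import Order.TTheory GRing.Theory Num.Theory.
Local Open Scope ring_scope.

(* Players N = {1,...,n} are represented by 'I_n. *)
Definition link (n : nat) := {l : {set 'I_n} | #|l| == 2%N}.
(* A network is any set of links (a subset of g_N = all links). *)
Definition network (n : nat) := {set link n}.

Section Net.
Variable n : nat.

Definition adj (g : network n) : rel 'I_n :=
  fun i j => [exists l in g, (i != j) && (i \in val l) && (j \in val l)].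

Definition players (g : network n) : {set 'I_n} :=
  [set i | [exists l in g, i \in val l]].

Definition links_of (i : 'I_n) (g : network n) : network n :=
  [set l in g | i \in val l].
Definition all_links_of (i : 'I_n) : network n := links_of i setT.

Definition connected_net (h : network n) : bool :=
  (h != set0) &&
  [forall i in players h, forall j in players h, connect (adj h) i j].

Definition is_component (g h : network n) : bool :=
  [&& h \subset g, connected_net h &
      [forall h' : network n,
         ((h \subset h') && (h' \subset g) && connected_net h') ==> (h' == h)]].

Definition components (g : network n) : {set network n} :=
  [set h | is_component g h].

Variable R : realFieldType.

Definition network_game (v : network n -> R) : Prop := v set0 = 0.

Definition component_additive (v : network n -> R) : Prop :=
  forall g : network n, v g = \sum_(h in components g) v h.

Definition is_prob (rho : network n -> R) : Prop :=
  (forall g, 0 <= rho g) /\ \sum_(g : network n) rho g = 1.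

Definition restr (rho : network n -> R) (g : network n) : network n -> R :=
  fun h => if h \subset g then \sum_(h' : network n | h' \subset ~: g) rho (h :|: h')
           else 0.

Definition rho_minus_link (rho : network n -> R) (ij : link n) :=
  restr rho (~: [set ij]).
Definition rho_minus_player (rho : network n -> R) (i : 'I_n) :=
  restr rho (~: all_links_of i).

Definition expected (v : network n -> R) (rho : network n -> R) : R :=
  \sum_(g : network n) rho g * v g.

Definition delta_link (v : network n -> R) (ij : link n) (g : network n) : R :=
  v (ij |: g) - v g.
Definition delta_player (v : network n -> R) (i : 'I_n) (g : network n) : R :=
  v g - v (g :\: links_of i g).

End Net.

(* Main.v *)
Require Import Defs.
From HB Require Import structures.
From mathcomp Require Import all_boot all_order all_algebra.
Import Order.TTheory GRing.Theory Num.Theory.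
Local Open Scope ring_scope.

Lemma restr_expected (R : realFieldType) (n : nat)
  (v : network n -> R) (rho : network n -> R) (S : network n) :
  expected v (restr rho (~: S)) = \sum_(G : network n) rho G * v (G :\: S).
Proof.
rewrite /expected [RHS](partition_big (fun G => G :\: S) xpredT) //=.
apply: eq_bigr => h _; rewrite /restr.
case: ifP => hS.
- rewrite big_distrl /= setCK.
  rewrite [RHS](reindex_onto (fun j => h :|: j) (fun G => G :&: S)); last first.
    move=> G /eqP <-; apply/setP => x; rewrite !inE; by case: (x \in S); case: (x \in G).
  apply: eq_big => [j|j Hj].
  + apply/idP/idP.
    * move=> Hj; apply/andP; split; apply/eqP/setP => x; rewrite !inE;
      have/implyP := subsetP hS x; have/implyP := subsetP Hj x; rewrite !inE;
      by case: (x \in S); case: (x \in h); case: (x \in j).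
    * case/andP => _ /eqP <-; exact: subsetIr.
  + congr (_ * _); congr (v _); apply/setP => x; rewrite !inE;
    have/implyP := subsetP hS x; have/implyP := subsetP Hj x; rewrite !inE;
    by case: (x \in S); case: (x \in h); case: (x \in j).
- rewrite mul0r big1 // => G /eqP HG; exfalso.
  have : G :\: S \subset ~: S by apply/subsetP => x; rewrite !inE; case/andP.
  by rewrite HG hS.
Qed.

Theorem proposition3 (R : realFieldType) (n : nat)
  (v : network n -> R) (rho : network n -> R) :
  network_game v -> is_prob rho -> component_additive v ->
  (forall ij : link n,
     expected v (rho_minus_link rho ij) =
     expected v rho -
       \sum_(g : network n | ij \notin g) rho (ij |: g) * delta_link v ij g) /\
  (forall i : 'I_n,
     expected v (rho_minus_player rho i) =
     expected v rho -
       \sum_(g : network n | i \in players g) rho g * delta_player v i g).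
Proof.
move=> _ _ _; split.
- move=> ij; rewrite /rho_minus_link restr_expected.
  apply/eqP; rewrite eq_sym subr_eq addrC -subr_eq; apply/eqP.
  rewrite /expected -sumrB.
  rewrite [LHS](bigID (fun G : network n => ij \in G)) /= [X in _ + X]big1; last first.
    move=> G HG; have -> : G :\ ij = G.
      by apply/setP => x; rewrite !inE; case: eqP => // ->; rewrite (negbTE HG).
    by rewrite subrr.
  rewrite addr0 [LHS](reindex_onto (fun g => ij |: g) (fun G => G :\ ij)); last first.
    by move=> G HG; rewrite setD1K.
  apply: eq_big => [g|g /andP [_ /eqP Hg]].
  + rewrite setU11 /=; apply/idP/idP.
    * by move/eqP <-; rewrite !inE eqxx.
    * by move=> Hg; rewrite setU1K.
  + by rewrite /delta_link Hg -mulrBr.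
- move=> i; rewrite /rho_minus_player restr_expected.
  apply/eqP; rewrite eq_sym subr_eq addrC -subr_eq; apply/eqP.
  rewrite /expected -sumrB.
  rewrite [LHS](bigID (fun G : network n => i \in players G)) /= [X in _ + X]big1; last first.
    move=> G HG; have -> : G :\: all_links_of i = G.
      apply/setP => x; rewrite !inE; case Hx: (x \in G); rewrite ?andbF //= andbT.
      apply/negP => Hi; move/negP: HG; apply; rewrite inE; apply/existsP; exists x.
      by rewrite Hx.
    by rewrite subrr.
  rewrite addr0; apply: eq_bigr => G _.
  have -> : G :\: all_links_of i = G :\: links_of i G.
    by apply/setP => x; rewrite /all_links_of /links_of !inE; case: (x \in G); case: (i \in val x).
  by rewrite /delta_player -mulrBr.
Qed.
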